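(* Let $k\ge0$ be an integer and $a,b,d\in\mathbb{C}$ generic. Put $u=\tfrac34-\tfrac k2-\tfrac a2+\tfrac b2$, $v=\tfrac34-\tfrac k2-\tfrac a2-\tfrac b2$ and define the polynomial of degree $3k$ in $n$ $$Q_k^{(3')}(n;a;b;d)=\frac{1}{(u)_k(v)_k}\sum_{j=0}^k\frac{(-\tfrac n2)_j(-\tfrac n2+\tfrac12)_j(-k)_j(-n-a+d)_j}{j!\,(d)_j}\,(u-n+j)_{k-j}(v-n+j)_{k-j}.$$ Then, near $x=0$, $${}_4F_3\!\left[\begin{matrix}\tfrac a3,\ \tfrac13+\tfrac a3,\ \tfrac23+\tfrac a3,\ k+d\\ \tfrac34+\tfrac k2+\tfrac a2+\tfrac b2,\ \tfrac34+\tfrac k2+\tfrac a2-\tfrac b2,\ d\end{matrix}\,\Big|\,\frac{27x^2}{(4-x)^3}\right]=\Bigl(1-\tfrac x4\Bigr)^a\sum_{n=0}^\infty\frac{(a)_n(\tfrac14-\tfrac k2+\tfrac a2-\tfrac b2)_n(\tfrac14-\tfrac k2+\tfrac a2+\tfrac b2)_n}{n!\,(\tfrac12+k+a+b)_n(\tfrac12+k+a-b)_n}\,Q_k^{(3')}(n;a;b;d)\,x^n.$$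
   Context: $(c)_n$ denotes the Pochhammer symbol, $(c)_0=1$; ${}_pF_q$ is the generalized hypergeometric series. Parameters are assumed generic so that no lower parameter is a nonpositive integer and $(u)_k(v)_k\ne0$. *)

(* Defs.v *)
From HB Require Import structures.
From mathcomp Require Import all_boot all_order all_algebra.
Set Implicit Arguments. Unset Strict Implicit. Unset Printing Implicit Defensive.
Import Order.TTheory GRing.Theory Num.Theory.
Local Open Scope ring_scope.

Definition poch (R : ringType) (c : R) (n : nat) : R :=
  \prod_(i < n) (c + i%:R).

Definition fps (R : Type) := nat -> R.

Definition fps_mul (R : ringType) (f g : fps R) : fps R :=
  fun n => \sum_(i < n.+1) f i * g (n - i)%N.

Definition fps_one (R : ringType) : fps R := fun n => if n is 0%N then 1 else 0.

Definition fps_pow (R : ringType) (f : fps R) (m : nat) : fps R :=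
  iter m (fps_mul f) (fps_one R).

(* composition F(g) for g with zero constant term (only m <= n contribute) *)
Definition fps_comp (R : ringType) (F g : fps R) : fps R :=
  fun n => \sum_(m < n.+1) F m * fps_pow g m n.

Definition gbinom (R : fieldType) (a : R) (n : nat) : R :=
  (\prod_(i < n) (a - i%:R)) / n`!%:R.

Definition binser (R : fieldType) (c a : R) : fps R :=
  fun n => gbinom a n * c ^+ n.

Definition hyp (R : fieldType) (ups lows : seq R) : fps R :=
  fun n => (\prod_(p <- ups) poch p n) /
           ((\prod_(q <- lows) poch q n) * n`!%:R).

(* the series 27 x^2 / (4 - x)^3 = 27 x^2 * 4^{-3} (1 - x/4)^{-3} *)
Definition arg27 (R : fieldType) : fps R :=
  fps_mul (fun n => if n == 2%N then 27%:R else 0)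
          (fun n => (64%:R)^-1 * binser (- 4%:R^-1) (- 3%:R) n).

Definition Qk3 (R : fieldType) (k : nat) (n a b d : R) : R :=
  let u := 3%:R / 4%:R - k%:R / 2%:R - a / 2%:R + b / 2%:R in
  let v := 3%:R / 4%:R - k%:R / 2%:R - a / 2%:R - b / 2%:R in
  (poch u k * poch v k)^-1 *
  \sum_(j < k.+1)
     (poch (- n / 2%:R) j * poch (- n / 2%:R + 2%:R^-1) j
      * poch (- k%:R) j * poch (- n - a + d) j)
     / (j`!%:R * poch d j)
     * poch (u - n + j%:R) (k - j) * poch (v - n + j%:R) (k - j).

(* "generic": c is not a nonpositive integer *)
Definition not_nonpos_int (R : ringType) (c : R) : Prop :=
  forall m : nat, c + m%:R != 0.

(* Main.v *)
Require Import Defs.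
From HB Require Import structures.
From mathcomp Require Import all_boot all_order all_algebra.
From mathcomp Require Import ring zify.
From Stdlib Require Import FunctionalExtensionality.
Import Order.TTheory GRing.Theory Num.Theory.
Local Open Scope ring_scope.

Set Implicit Arguments. Unset Strict Implicit. Unset Printing Implicit Defensive.


Section P.

Variable R : numFieldType.
Implicit Types x y : R.

Lemma poch0 x : poch x 0 = 1.
Proof. by rewrite /poch big_ord0. Qed.

Lemma pochS x n : poch x n.+1 = poch x n * (x + n%:R).
Proof. by rewrite /poch big_ord_recr. Qed.

Lemma pochSl x n : poch x n.+1 = x * poch (x + 1) n.
Proof. rewrite /poch big_ord_recl /= addr0; congr (_ * _); apply: eq_bigr => i _.
by rewrite /bump /= natrD addrA. Qed.

Lemma poch_add x m n : poch x (m + n) = poch x m * poch (x + m%:R) n.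
Proof. elim: n => [|n IH]; first by rewrite addn0 poch0 mulr1.
by rewrite addnS !pochS IH natrD addrA mulrA. Qed.

Lemma poch_neq0 x n : (forall m : nat, x + m%:R != 0) -> poch x n != 0.
Proof. by move=> H; rewrite /poch; apply/prodf_neq0 => i _. Qed.

Lemma poch_negN M j : (M < j)%N -> poch (- (M%:R : R)) j = 0.
Proof. move=> H; rewrite -(subnKC H) poch_add pochS; by rewrite addNr mulr0 mul0r. Qed.

Lemma poch_refl x n : poch x n = (-1) ^+ n * poch (1 - x - n%:R) n.
Proof. elim: n x => [|n IH] x; first by rewrite !poch0 expr0 mulr1.
rewrite pochS IH pochSl exprS.
have -> : 1 - x - n.+1%:R + 1 = 1 - x - n%:R by rewrite -natr1; ring.
rewrite -natr1; ring. Qed.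

Lemma poch_negfact N l : poch (- (N%:R : R)) l = (-1) ^+ l * (('C(N, l) * l`!)%:R : R).
Proof. elim: l => [|l IH]; first by rewrite poch0 bin0 expr0 mul1r.
rewrite pochS IH exprS factS.
have -> : ('C(N, l.+1) * (l.+1 * l`!))%N = ((N - l) * 'C(N, l) * l`!)%N.
  by rewrite mulnA [X in (X * _)%N]mulnC mul_bin_left.
case: (leqP l N) => hl.
  rewrite !natrM natrB //; ring.
by rewrite bin_small // !(mul0n, muln0, mul0r, mulr0).
Qed.

Lemma vander x y r : poch (x + y) r = \sum_(i < r.+1) 'C(r, i)%:R * (poch x i * poch y (r - i)).
Proof.
elim: r => [|r IH]; first by rewrite big_ord_recl big_ord0 !poch0 bin0 addr0 !mul1r.
rewrite pochS IH mulr_suml.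
transitivity (\sum_(i<r.+1) 'C(r,i)%:R * (poch x i.+1 * poch y (r-i)) +
              \sum_(i<r.+1) 'C(r,i)%:R * (poch x i * poch y (r.+1 - i))).
  rewrite -big_split; apply: eq_bigr => i _ /=.
  have hi : (i <= r)%N by rewrite -ltnS ltn_ord.
  rewrite subSn // !pochS natrB //; ring.
rewrite big_ord_recr (big_ord_recl r) [in RHS]big_ord_recl [in RHS]big_ord_recr /=.
rewrite !subnn subn0 !bin0 !binn.
rewrite [X in _ = _ + (X + _)](_ : _ = \sum_(i < r) 'C(r, i.+1)%:R * (poch x i.+1 * poch y (r - i)) + \sum_(i < r) 'C(r, i)%:R * (poch x i.+1 * poch y (r - i))).
  set S1 := \sum_(i < r) _ ; set S2 := \sum_(i < r) _ .
  rewrite /bump /= add1n; ring.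
rewrite -big_split; apply: eq_bigr => i _ /=.
by rewrite /bump /= add1n subSS binS natrD mulrDl.
Qed.
End P.


Section P2.
Variable R : numFieldType.
Implicit Types x y al be e : R.

Definition Ysa al be e N j := poch al j * poch be j * poch (al+be+e + j%:R) (N - j) * poch e (N - j).

Definition Wsa al be e N j := if j is j'.+1 then 'C(N, j')%:R *
  (poch al j * poch be j * poch (e + 1) (N.+1 - j) * poch (al+be+e+j%:R) (N.+1 - j)) else 0.

Lemma saal_term al be e N j : (j < N.+2)%N ->
  'C(N.+1, j)%:R * Ysa al be e N.+1 j - (al+e)*(be+e) * ('C(N, j)%:R * Ysa al be (e+1) N j)
  = (- Wsa al be e N j.+1) - (- Wsa al be e N j).
Proof.
rewrite ltnS leq_eqVlt => /orP[/eqP->|hj].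
  rewrite /Ysa /Wsa /= ?subnn ?binn !(bin_small (ltnSn N)) !poch0; ring.
have hjN : (j <= N)%N by [].
rewrite /Ysa /Wsa subSn // !subSS.
rewrite [poch (_ + _ + e + _) (N - j).+1]pochSl [poch e (N - j).+1]pochSl.
rewrite [poch (e + 1) (N - j).+1]pochS (pochS al) (pochS be).
have h1 : al + be + (e + 1) + j%:R = al + be + e + j%:R + 1 by ring.
have h2 : al + be + e + j.+1%:R = al + be + e + j%:R + 1 by rewrite -natr1; ring.
rewrite h1 h2; clear h1 h2.
case: j hj hjN => [|j] hj hjN.
  rewrite !bin0 !subn0 !poch0; ring.
rewrite binS.
have hc : 'C(N, j.+1)%:R = 'C(N, j)%:R * (N%:R - j%:R) / (j.+1)%:R :> R.
  rewrite -natrB; last by apply: ltnW.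
  rewrite -natrM mulnC -mul_bin_left natrM; field. by rewrite addrC natr1 pnatr_eq0.
rewrite natrD hc natrB //.
rewrite -!natr1. field. by rewrite natr1 pnatr_eq0.
Qed.

Lemma saal_step N al be e :
  \sum_(j < N.+2) 'C(N.+1, j)%:R * Ysa al be e N.+1 j =
  (al+e)*(be+e) * \sum_(j < N.+1) 'C(N, j)%:R * Ysa al be (e+1) N j.
Proof.
have ext : \sum_(j < N.+2) 'C(N, j)%:R * Ysa al be (e+1) N j =
           \sum_(j < N.+1) 'C(N, j)%:R * Ysa al be (e+1) N j.
  by rewrite big_ord_recr /= bin_small // mul0r addr0.
rewrite -ext mulr_sumr; apply/eqP; rewrite -subr_eq0 -sumrB; apply/eqP.
rewrite (eq_bigr (fun j : 'I_N.+2 => (- Wsa al be e N j.+1) - (- Wsa al be e N j))); last first.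
  by move=> j _; apply: saal_term.
rewrite -(big_mkord (fun _ => true) (fun j => (- Wsa al be e N j.+1) - (- Wsa al be e N j))).
rewrite telescope_sumr // /Wsa bin_small // mul0r; ring.
Qed.

Lemma saal N al be e :
  \sum_(j < N.+1) 'C(N, j)%:R * Ysa al be e N j = poch (be + e) N * poch (al + e) N.
Proof.
elim: N e => [|N IH] e.
  by rewrite big_ord_recl big_ord0 /Ysa !poch0 bin0 !mulr1 addr0.
rewrite saal_step IH !pochSl.
have -> : be + (e + 1) = be + e + 1 by ring.
have -> : al + (e + 1) = al + e + 1 by ring.
ring.
Qed.
End P2.


Section P3.
Variable R : numFieldType.
Implicit Types x y al be c : R.

Lemma sum_extend (f : nat -> R) n m : (n <= m)%N ->
  (forall i, (n <= i)%N -> (i < m)%N -> f i = 0) ->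
  \sum_(i < n) f i = \sum_(i < m) f i.
Proof.
move=> nm H; rewrite -!(big_mkord (fun _ => true)) (big_cat_nat (leq0n n) nm) /=.
rewrite [X in _ = _ + X]big1_seq ?addr0 // => i /andP[_]; rewrite mem_index_iota => /andP[h1 h2].
exact: H.
Qed.

Lemma sum_window (f : nat -> R) n p r : (p + r <= n)%N ->
  (forall i, (i <= n)%N -> (i < p)%N || (p + r < i)%N -> f i = 0) ->
  \sum_(i < n.+1) f i = \sum_(i < r.+1) f (p + i)%N.
Proof.
move=> hn H.
rewrite (@sum_extend (fun i => f (p + i)) r.+1 (n.+1 - p)); last first.
- move=> i h1 h2; apply: H; first lia. apply/orP; right; rewrite ltn_add2l; exact: h1.
- lia.
rewrite -!(big_mkord (fun _ => true)).
have hp : (p <= n.+1)%N by apply: leq_trans (leq_addr r p) _; apply: leqW.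
rewrite (big_cat_nat (leq0n p) hp) /=.
rewrite big1_seq ?add0r; last first.
  move=> i /andP[_]; rewrite mem_index_iota => /andP[_ h]; apply: H; [lia| by rewrite h].
rewrite -{1}(add0n p) big_addn big_mkord; apply: eq_bigr => i _; by rewrite addnC.
Qed.

Lemma prod_sub_poch al n : \prod_(i < n) (al - i%:R) = (-1) ^+ n * poch (- al) n.
Proof. elim: n => [|n IH]; first by rewrite big_ord0 poch0 mulr1.
rewrite big_ord_recr /= IH pochS exprS; ring. Qed.

Lemma gbE al n : gbinom al n = (-1) ^+ n * poch (- al) n / n`!%:R.
Proof. by rewrite /gbinom prod_sub_poch. Qed.

Lemma fact_neq0 n : (n`!%:R : R) != 0.
Proof. by rewrite pnatr_eq0 -lt0n fact_gt0. Qed.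

Lemma gb_vander al be r :
  \sum_(i < r.+1) gbinom al i * gbinom be (r - i) = gbinom (al + be) r.
Proof.
rewrite gbE opprD vander mulr_sumr mulr_suml; apply: eq_bigr => i _.
have hi : (i <= r)%N by rewrite -ltnS ltn_ord.
rewrite !gbE.
have hb : ('C(r, i)%:R : R) = r`!%:R / (i`!%:R * (r - i)`!%:R).
  rewrite -(bin_fact hi) !natrM; field; apply/andP; split; exact: fact_neq0.
rewrite hb; have -> : (-1) ^+ r = (-1) ^+ i * (-1) ^+ (r - i) :> R by rewrite -exprD subnKC.
field; rewrite !fact_neq0 //.
Qed.

Definition Eg c al p n : R := if (p <= n)%N then gbinom al (n - p) * c ^+ (n - p) else 0.

Lemma Eg_mul c al be p q n :
  \sum_(i < n.+1) Eg c al p i * Eg c be q (n - i) = Eg c (al + be) (p + q) n.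
Proof.
rewrite {3}/Eg; case: ifP => hpq; last first.
  apply: big1 => i _; rewrite /Eg; case: ifP => h1; last by rewrite mul0r.
  case: ifP => h2; last by rewrite mulr0.
  exfalso; move/negbT: hpq; have := ltn_ord i; lia.
rewrite (@sum_window (fun i => Eg c al p i * Eg c be q (n - i)) n p (n - p - q)); last first.
  move=> i hin /orP[h|h]; rewrite /Eg.
    by rewrite leqNgt h mul0r.
  case: (p <= i)%N; last by rewrite mul0r.
  case: ifP => h2; last by rewrite mulr0.
  exfalso; lia.
  lia.
rewrite subnDA -gb_vander mulr_suml; apply: eq_bigr => i _.
have hi : (i <= n - p - q)%N by rewrite -ltnS ltn_ord.
rewrite /Eg leq_addr addKn.
have -> : (q <= n - (p + i))%N by lia.
have -> : (n - (p + i) - q = n - p - q - i)%N by lia.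
have E : c ^+ (n - p - q) = c ^+ i * c ^+ (n - p - q - i) by rewrite -exprD subnKC.
rewrite E; ring.
Qed.
End P3.


Section P4.
Variable R : numFieldType.
Implicit Types x y al be c : R.

Definition K27 : R := 27%:R / 64%:R.
Definition c4 : R := - 4%:R^-1.

Lemma arg27E i : arg27 R i = K27 * Eg c4 (- 3%:R) 2 i.
Proof.
rewrite /arg27 /fps_mul /Eg /binser /K27 /c4.
case: ifP => hi.
  have h2 : (2 < i.+1)%N by [].
  rewrite (bigD1 (Ordinal h2)) //= big1 ?addr0; first by rewrite mulrA mulrCA !mulrA.
  move=> j /negbTE hj; case: ifP => [/eqP hj2|]; last by rewrite mul0r.
  by exfalso; move: hj; rewrite -val_eqE /= hj2.
set z := (X in _ = _ * X). rewrite (_ : z = 0) // mulr0.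
apply: big1 => j _; case: ifP => [/eqP hj2|]; last by rewrite mul0r.
exfalso; have := ltn_ord j; rewrite hj2 => h; move: hi; lia.
Qed.

Lemma gbinom0 n : gbinom (0 : R) n = (n == 0)%:R.
Proof. case: n => [|n]; first by rewrite /gbinom big_ord0 mul1r invr1.
by rewrite /gbinom big_ord_recl /= subrr mul0r mul0r. Qed.

Lemma powE m n : fps_pow (arg27 R) m n = K27 ^+ m * Eg c4 (- (3 * m)%:R) (2 * m) n.
Proof.
elim: m n => [|m IH] n.
  rewrite /fps_pow /= /fps_one /Eg muln0 oppr0 expr0 mul1r subn0 gbinom0 /=.
  by case: n => [|n] /=; rewrite ?expr0 ?mulr1 ?mul0r.
rewrite /fps_pow iterS -/(fps_pow (arg27 R) m) /fps_mul.
rewrite (eq_bigr (fun i : 'I_n.+1 => K27 ^+ m.+1 * (Eg c4 (- 3%:R) 2 i * Eg c4 (- (3 * m)%:R) (2 * m) (n - i)))); last first.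
  by move=> i _; rewrite arg27E IH exprS; ring.
rewrite -mulr_sumr Eg_mul.
congr (_ * Eg _ _ _ _); last by rewrite mulnS.
by rewrite -opprD -natrD mulnS.
Qed.

Lemma assemble (H cs : nat -> R) (a : R) :
  (forall n, cs n = \sum_(m < n.+1) H m * (K27 ^+ m * Eg c4 (- (3 * m)%:R - a) (2 * m) n)) ->
  fps_comp H (arg27 R) = fps_mul (binser c4 a) cs.
Proof.
move=> hc; apply: functional_extensionality => n.
rewrite /fps_comp /fps_mul.
under eq_bigr do rewrite powE.
under [RHS]eq_bigr => i _ do rewrite hc.
rewrite [RHS](eq_bigr (fun i : 'I_n.+1 => \sum_(m < n.+1) Eg c4 a 0 i * (H m * (K27 ^+ m * Eg c4 (- (3 * m)%:R - a) (2 * m) (n - i))))); last first.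
  move=> i _; rewrite (_ : binser c4 a i = Eg c4 a 0 i); last by rewrite /binser /Eg subn0.
  rewrite mulr_sumr.
  rewrite (@sum_extend _ (fun m => Eg c4 a 0 i * (H m * (K27 ^+ m * Eg c4 (- (3 * m)%:R - a) (2 * m) (n - i)))) (n - i).+1 n.+1).
  - by [].
  - lia.
  - move=> m h1 h2; rewrite /Eg; case: ifP => h; last by rewrite !mulr0.
    exfalso; lia.
rewrite exchange_big /=; apply: eq_bigr => m _.
rewrite (eq_bigr (fun i : 'I_n.+1 => H m * K27 ^+ m * (Eg c4 a 0 i * Eg c4 (- (3 * m)%:R - a) (2 * m) (n - i)))); last by move=> i _; ring.
by rewrite -mulr_sumr Eg_mul add0n addrC subrK mulrA.
Qed.
End P4.


Section P5.
Variable R : numFieldType.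
Implicit Types x y : R.

Lemma poch_cat x y m p : x + m%:R = y -> poch x m * poch y p = poch x (m + p).
Proof. by move=> <-; rewrite poch_add. Qed.

Lemma poch_tripl y m : poch y (3 * m) =
  27%:R ^+ m * poch (y / 3%:R) m * poch (3%:R^-1 + y / 3%:R) m * poch (2%:R / 3%:R + y / 3%:R) m.
Proof.
elim: m => [|m IH]; first by rewrite muln0 !poch0 expr0 !mulr1.
rewrite mulnS addnC poch_add IH !pochS exprS.
rewrite !poch0 natrM -!natr1; by field.
Qed.

Lemma poch_dup2 y m : poch y (2 * m) = 4%:R ^+ m * poch (y / 2%:R) m * poch (y / 2%:R + 2%:R^-1) m.
Proof.
elim: m => [|m IH]; first by rewrite muln0 !poch0 expr0 !mulr1.
rewrite mulnS addnC poch_add IH !pochS exprS.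
rewrite !poch0 natrM -!natr1; by field.
Qed.

Lemma half_cases n : n = (n./2 + n./2)%N \/ n = (n./2 + n./2).+1.
Proof. move: (odd_double_half n); rewrite -addnn; case: (odd n) => /= h; [right|left]; by rewrite -{1}h. Qed.

Lemma poch_dup y n : poch y n = 2%:R ^+ n * poch (y / 2%:R) (n - n./2) * poch (y / 2%:R + 2%:R^-1) n./2.
Proof.
set M := n./2.
have h4 : (2%:R : R) ^+ 2 = 4%:R by rewrite -natrX.
case: (half_cases n) => hn; rewrite -/M in hn.
  have -> : (n - M = M)%N by lia.
  by rewrite hn addnn -mul2n poch_dup2 exprM h4.
have -> : (n - M = M.+1)%N by lia.
rewrite hn addnn -mul2n pochS poch_dup2 exprS exprM pochS h4 natrM.
by field.
Qed.

Lemma UL x (n M j k : nat) : (j <= M)%N -> (M <= n)%N -> (j <= k)%N ->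
  poch (x - n%:R + j%:R) (M - j) * poch (1 - x) (n - M) * poch x k =
  (-1) ^+ M * poch (1 - k%:R - x) n * poch (x - n%:R + j%:R) (k - j).
Proof.
move=> hjM hMn hjk.
rewrite [poch (1 - x) _]poch_refl [poch (1 - k%:R - x) _]poch_refl.
have e1 : 1 - (1 - x) - (n - M)%:R = x - n%:R + j%:R + (M - j)%:R by rewrite !natrB //; ring.
have e2 : 1 - (1 - k%:R - x) - n%:R = x - n%:R + j%:R + (k - j)%:R by rewrite natrB //; ring.
rewrite e1 e2.
have s : (-1) ^+ M * (-1) ^+ n = (-1) ^+ (n - M) :> R.
  by rewrite -{1}(subnKC hMn) exprD mulrA -exprD addnn -mul2n mulnC exprM sqrr_sign mul1r.
rewrite mulrA -s.
set X := x - n%:R + j%:R.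
have A : poch X (M - j) * poch (X + (M - j)%:R) (n - M) * poch x k = poch X (k - j + n).
  rewrite (@poch_cat X (X + (M - j)%:R) (M - j) (n - M) erefl).
  have e4 : (M - j + (n - M) = n - j)%N by lia.
  have e3 : X + (n - j)%:R = x by rewrite /X natrB //; [ring|lia].
  rewrite e4 (poch_cat _ e3).
  by have -> : (n - j + k = k - j + n)%N by lia.
have B : poch X (k - j) * poch (X + (k - j)%:R) n = poch X (k - j + n).
  by rewrite (@poch_cat X (X + (k - j)%:R) (k - j) n erefl).
transitivity ((-1) ^+ (n - M) * poch X (k - j + n)).
  rewrite -A s; ring.
rewrite -B s; ring.
Qed.
End P5.


Lemma shift_nz (R : numFieldType) (x : R) : (forall m : nat, x + m%:R != 0) ->
  forall j : nat, (forall m : nat, x + j%:R + m%:R != 0).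
Proof. by move=> h j m; rewrite -addrA -natrD. Qed.

Lemma tri_swap (R : numFieldType) (F : nat -> nat -> R) n :
  \sum_(m < n.+1) \sum_(j < m.+1) F j (m - j)%N = \sum_(j < n.+1) \sum_(l < (n - j).+1) F j l.
Proof.
elim: n => [|n IH]; first by rewrite !big_ord1.
rewrite big_ord_recr /= IH [RHS]big_ord_recr /= subnn big_ord1.
rewrite [X in _ = X + _](eq_bigr (fun j : 'I_n.+1 => \sum_(l < (n - j).+1) F j l + F j (n.+1 - j)%N)); last first.
  move=> j _; have hj : (j <= n)%N by rewrite -ltnS.
  by rewrite subSn // big_ord_recr.
by rewrite big_split /= [\sum_(j < n.+2) _]big_ord_recr /= subnn addrA.
Qed.

Section Core.
Variable R : numFieldType.
Variables (n k : nat) (a b d : R).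

Definition L1 : R := 3%:R / 4%:R + k%:R / 2%:R + a / 2%:R + b / 2%:R.
Definition L2 : R := 3%:R / 4%:R + k%:R / 2%:R + a / 2%:R - b / 2%:R.
Definition uu : R := 3%:R / 4%:R - k%:R / 2%:R - a / 2%:R + b / 2%:R.
Definition vv : R := 3%:R / 4%:R - k%:R / 2%:R - a / 2%:R - b / 2%:R.
Definition Cc : R := 2%:R^-1 + k%:R + a + b.
Definition Dd : R := 2%:R^-1 + k%:R + a - b.
Definition AA : R := 4%:R^-1 - k%:R / 2%:R + a / 2%:R - b / 2%:R.
Definition BB : R := 4%:R^-1 - k%:R / 2%:R + a / 2%:R + b / 2%:R.
Definition h0 : R := - n%:R / 2%:R.
Definition h1 : R := - n%:R / 2%:R + 2%:R^-1.
Definition MM : nat := n./2.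
Definition hh : R := 2%:R^-1 - n%:R + MM%:R.

Definition TT m := poch h0 m * poch h1 m * poch (a + n%:R) m * poch (k%:R + d) m /
  (poch L1 m * poch L2 m * poch d m * m`!%:R).
Definition UU j := poch h0 j * poch h1 j * poch (- k%:R) j * poch (d - a - n%:R) j /
  (poch L1 j * poch L2 j * poch d j * j`!%:R).
Definition VV j l := poch (h0 + j%:R) l * poch (h1 + j%:R) l * poch (k%:R + a + n%:R) l /
  (poch (L1 + j%:R) l * poch (L2 + j%:R) l * l`!%:R).

Lemma parity : (h0 = - MM%:R /\ h1 = hh) \/ (h0 = hh /\ h1 = - MM%:R).
Proof.
rewrite /h0 /h1 /hh; case: (half_cases n); rewrite -/MM => ->.
  by left; split; rewrite natrD; field.
by right; split; rewrite -natr1 natrD; field.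
Qed.

Lemma parity_shift j l : poch (h0 + j%:R) l * poch (h1 + j%:R) l =
  poch (- MM%:R + j%:R) l * poch (hh + j%:R) l.
Proof. by case: parity => [[-> ->]|[-> ->]] //; rewrite mulrC. Qed.

Lemma parity0 j : poch h0 j * poch h1 j = poch (- MM%:R) j * poch hh j.
Proof. by have := parity_shift 0 j; rewrite !addr0. Qed.

Lemma UU0 j : (MM < j)%N -> UU j = 0.
Proof. by move=> h; rewrite /UU parity0 poch_negN // !mul0r. Qed.

Hypothesis hL1 : forall m : nat, L1 + m%:R != 0.
Hypothesis hL2 : forall m : nat, L2 + m%:R != 0.
Hypothesis hd : forall m : nat, d + m%:R != 0.

Lemma nzL1 j l : poch (L1 + j%:R) l != 0. Proof. exact: poch_neq0 (shift_nz hL1 j). Qed.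
Lemma nzL2 j l : poch (L2 + j%:R) l != 0. Proof. exact: poch_neq0 (shift_nz hL2 j). Qed.
Lemma nzd j l : poch (d + j%:R) l != 0. Proof. exact: poch_neq0 (shift_nz hd j). Qed.
Lemma nzL1' l : poch L1 l != 0. Proof. exact: poch_neq0 hL1. Qed.
Lemma nzL2' l : poch L2 l != 0. Proof. exact: poch_neq0 hL2. Qed.
Lemma nzd' l : poch d l != 0. Proof. exact: poch_neq0 hd. Qed.

Lemma S1 m : TT m = \sum_(j < m.+1) UU j * VV j (m - j).
Proof.
have sa := saal m (- k%:R) (d - a - n%:R) (k%:R + a + n%:R).
have e1 : d - a - n%:R + (k%:R + a + n%:R) = k%:R + d by ring.
have e2 : - k%:R + (k%:R + a + n%:R) = a + n%:R by ring.
have e3 : - k%:R + (d - a - n%:R) + (k%:R + a + n%:R) = d by ring.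
rewrite e1 e2 in sa.
have -> : TT m = poch h0 m * poch h1 m / (poch L1 m * poch L2 m * poch d m * m`!%:R) *
   (poch (k%:R + d) m * poch (a + n%:R) m) by rewrite /TT; ring.
rewrite -sa mulr_sumr; apply: eq_bigr => [[j hj]] _ /=.
rewrite /Ysa e3.
have [l ->] : exists l, m = (j + l)%N by exists (m - j)%N; rewrite subnKC // -ltnS.
rewrite addKn /UU /VV !poch_add.
have hb : ('C(j + l, j)%:R : R) = (j + l)`!%:R / (j`!%:R * l`!%:R).
  have := bin_fact (leq_addr l j); rewrite addKn => <-.
  rewrite !natrM; field; apply/andP; split; exact: fact_neq0.
rewrite hb; field.
by rewrite !fact_neq0 nzL1 nzL2 nzd nzL1' nzL2' nzd'.
Qed.

Definition RR j := poch (uu - n%:R + j%:R) (MM - j) * poch (vv - n%:R + j%:R) (MM - j) /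
  (poch (L1 + j%:R) (MM - j) * poch (L2 + j%:R) (MM - j)).

Lemma MM_le : (MM <= n)%N.
Proof. rewrite /MM; case: (half_cases n) => h; lia. Qed.

Lemma S2 j : (j <= MM)%N -> \sum_(l < (n - j).+1) VV j l = RR j.
Proof.
move=> hj.
set P := (MM - j)%N.
set be := k%:R + a + n%:R.
set e := 1 - L2 - MM%:R.
have eP : - MM%:R + j%:R = - (P%:R : R) by rewrite /P natrB //; ring.
have hPn : (P.+1 <= (n - j).+1)%N by have := MM_le; rewrite /P; lia.
rewrite -(@sum_extend _ (fun l => VV j l) P.+1 (n - j).+1 hPn); last first.
  move=> l h1 h2; rewrite /VV parity_shift eP poch_negN // !mul0r //.
have hsum : forall l, (l < P.+1)%N -> VV j l =
   (-1) ^+ P / (poch (L1 + j%:R) P * poch (L2 + j%:R) P) * ('C(P, l)%:R * Ysa (hh + j%:R) be e P l).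
  move=> l hl; have hlP : (l <= P)%N by rewrite -ltnS.
  rewrite /VV parity_shift eP poch_negfact /Ysa.
  have eY : hh + j%:R + be + e + l%:R = L1 + j%:R + l%:R.
    by rewrite /hh /be /e /L1 /L2; field.
  rewrite eY.
  have hP1 : poch (L1 + j%:R) P = poch (L1 + j%:R) l * poch (L1 + j%:R + l%:R) (P - l).
    by rewrite -poch_add subnKC.
  have hP2 : poch (L2 + j%:R) P = poch (L2 + j%:R) l * poch (L2 + j%:R + l%:R) (P - l).
    by rewrite -poch_add subnKC.
  have hr : poch (L2 + j%:R + l%:R) (P - l) = (-1) ^+ (P - l) * poch e (P - l).
    rewrite poch_refl; congr (_ * poch _ _).
    by rewrite /e /P !natrB //; ring.
  have hs : (-1) ^+ P = (-1) ^+ l * (-1) ^+ (P - l) :> R by rewrite -exprD subnKC.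
  have nz1 := nzL1 j l.
  have nz2 := nzL2 j l.
  have nz3 : poch (L1 + j%:R + l%:R) (P - l) != 0 by exact: poch_neq0 (shift_nz (shift_nz hL1 j) l).
  have nz4 : poch (L2 + j%:R + l%:R) (P - l) != 0 by exact: poch_neq0 (shift_nz (shift_nz hL2 j) l).
  have nz5 : poch e (P - l) != 0.
    by move: nz4; rewrite hr mulf_eq0 negb_or => /andP[].
  have nz6 : ((-1) ^+ (P - l) : R) != 0 by rewrite signr_eq0.
  rewrite hP1 hP2 hr hs natrM.
  field.
  by rewrite nz1 nz2 nz3 nz5 nz6 fact_neq0.
rewrite (eq_bigr _ (fun (l : 'I_P.+1) _ => hsum l (ltn_ord l))).
rewrite -mulr_sumr saal /RR.
have ev : poch (be + e) P = (-1) ^+ P * poch (vv - n%:R + j%:R) P.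
  rewrite poch_refl; congr (_ * poch _ _).
  by rewrite /be /e /P /vv /L2 natrB //; field.
have eu : hh + j%:R + e = uu - n%:R + j%:R by rewrite /hh /e /uu /L2; field.
rewrite ev eu.
have ss : ((-1) ^+ P * (-1) ^+ P : R) = 1 by rewrite -expr2 sqrr_sign.
have gen : forall (s x y z : R), s / z * (s * x * y) = s * s * (y * x) / z by move=> *; ring.
by rewrite gen ss mul1r.
Qed.

Hypothesis hC : forall m : nat, Cc + m%:R != 0.
Hypothesis hD : forall m : nat, Dd + m%:R != 0.
Hypothesis huv : poch uu k * poch vv k != 0.

Definition Qt j := poch h0 j * poch h1 j * poch (- k%:R) j * poch (- n%:R - a + d) j /
  (j`!%:R * poch d j) * poch (uu - n%:R + j%:R) (k - j) * poch (vv - n%:R + j%:R) (k - j).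

Lemma nz1u : poch (1 - uu) (n - MM) != 0.
Proof. apply: poch_neq0 => m.
have -> : 1 - uu + m%:R = (Dd + (2 * m)%:R) / 2%:R by rewrite /uu /Dd natrM; field.
by rewrite mulf_neq0 // invr_eq0 pnatr_eq0.
Qed.

Lemma nz1v : poch (1 - vv) (n - MM) != 0.
Proof. apply: poch_neq0 => m.
have -> : 1 - vv + m%:R = (Cc + (2 * m)%:R) / 2%:R by rewrite /vv /Cc natrM; field.
by rewrite mulf_neq0 // invr_eq0 pnatr_eq0.
Qed.

Lemma nzuk : poch uu k != 0. Proof. by move: huv; rewrite mulf_eq0 negb_or => /andP[]. Qed.
Lemma nzvk : poch vv k != 0. Proof. by move: huv; rewrite mulf_eq0 negb_or => /andP[]. Qed.

Lemma eCn : poch Cc n = 2%:R ^+ n * poch (1 - vv) (n - MM) * poch L1 MM.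
Proof. rewrite poch_dup /MM; congr (_ * poch _ _ * poch _ _); rewrite /Cc /vv /L1; by field. Qed.

Lemma eDn : poch Dd n = 2%:R ^+ n * poch (1 - uu) (n - MM) * poch L2 MM.
Proof. rewrite poch_dup /MM; congr (_ * poch _ _ * poch _ _); rewrite /Dd /uu /L2; by field. Qed.

Lemma S3 j : (j <= MM)%N -> (j <= k)%N ->
  UU j * RR j = 4%:R ^+ n * poch AA n * poch BB n / (poch Cc n * poch Dd n) *
     ((poch uu k * poch vv k)^-1 * Qt j).
Proof.
move=> hjM hjk.
have eL1 : poch L1 MM = poch L1 j * poch (L1 + j%:R) (MM - j) by rewrite -poch_add subnKC.
have eL2 : poch L2 MM = poch L2 j * poch (L2 + j%:R) (MM - j) by rewrite -poch_add subnKC.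
have eA : AA = 1 - k%:R - uu by rewrite /AA /uu; field.
have eB : BB = 1 - k%:R - vv by rewrite /BB /vv; field.
have Uu := UL uu hjM MM_le hjk.
have Uv := UL vv hjM MM_le hjk.
have eUP : poch (uu - n%:R + j%:R) (MM - j) = (-1) ^+ MM * poch (1 - k%:R - uu) n *
   poch (uu - n%:R + j%:R) (k - j) / (poch (1 - uu) (n - MM) * poch uu k).
  rewrite -Uu; field; by rewrite nz1u nzuk.
have eVP : poch (vv - n%:R + j%:R) (MM - j) = (-1) ^+ MM * poch (1 - k%:R - vv) n *
   poch (vv - n%:R + j%:R) (k - j) / (poch (1 - vv) (n - MM) * poch vv k).
  rewrite -Uv; field; by rewrite nz1v nzvk.
rewrite /UU /RR /Qt eCn eDn eL1 eL2 eA eB eUP eVP.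
rewrite (_ : - n%:R - a + d = d - a - n%:R); last by ring.
have e4 : (4%:R : R) ^+ n = 2%:R ^+ n * 2%:R ^+ n by rewrite -exprMn -natrM.
rewrite e4.
have h2 : (2%:R : R) ^+ n != 0 by rewrite expf_neq0 // pnatr_eq0.
rewrite -signr_odd; case: (odd MM); rewrite ?expr1 ?expr0; field;
  by rewrite nzd' fact_neq0 nzvk nzuk nzL2 nzL2' nz1u nzL1 nzL1' nz1v h2.
Qed.

Lemma Qt0 j : (MM < j)%N || (k < j)%N -> Qt j = 0.
Proof.
case/orP => h; rewrite /Qt.
  by rewrite parity0 poch_negN // !mul0r.
by rewrite (@poch_negN R _ _ h) !(mulr0, mul0r).
Qed.

Lemma UU0' j : (k < j)%N -> UU j = 0.
Proof. by move=> h; rewrite /UU (@poch_negN R _ _ h) !(mulr0, mul0r). Qed.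

Lemma core2 : \sum_(m < n.+1) TT m =
  4%:R ^+ n * poch AA n * poch BB n / (poch Cc n * poch Dd n) * Qk3 k n%:R a b d.
Proof.
under eq_bigr => m _ do rewrite S1.
rewrite (tri_swap (fun j l => UU j * VV j l) n).
rewrite (eq_bigr (fun j : 'I_n.+1 => UU j * RR j)); last first.
  move=> j _; rewrite -mulr_sumr; case: (leqP j MM) => h; first by rewrite S2.
  by rewrite UU0 // !mul0r.
transitivity (4%:R ^+ n * poch AA n * poch BB n / (poch Cc n * poch Dd n) *
  ((poch uu k * poch vv k)^-1 * \sum_(j < k.+1) Qt j)); last by [].
rewrite (@sum_extend _ (fun j => UU j * RR j) n.+1 (n + k).+1); last first.
- move=> j h1 h2; rewrite UU0 ?mul0r //; have := MM_le; lia.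
- lia.
rewrite (@sum_extend _ (fun j => Qt j) k.+1 (n + k).+1); last first.
- move=> j h1 h2; apply: Qt0; apply/orP; right; exact: h1.
- lia.
rewrite !mulr_sumr; apply: eq_bigr => [[j hj]] _ /=.
case: (leqP j MM) => h1; last by rewrite UU0 // Qt0 ?h1 // !(mulr0, mul0r).
case: (leqP j k) => h2; last by rewrite UU0' // Qt0 ?h2 ?orbT // !(mulr0, mul0r).
by rewrite S3.
Qed.
End Core.


Section Fin.
Variable R : numFieldType.

Lemma gb_c4 (x : R) r : gbinom (- x) r * (c4 R) ^+ r = poch x r / (r`!%:R * 4%:R ^+ r).
Proof.
rewrite gbE opprK /c4 (_ : (- 4%:R^-1 : R) ^+ r = (-1) ^+ r / 4%:R ^+ r); last by rewrite [LHS]exprNn exprVn.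
have h := fact_neq0 R r.
have h4 : (4%:R : R) ^+ r != 0 by rewrite expf_neq0 // pnatr_eq0.
rewrite -signr_odd; case: (odd r); rewrite ?expr1 ?expr0; field; by rewrite h h4.
Qed.

Variables (n k : nat) (a b d : R).
Hypothesis hL1 : forall m : nat, L1 k a b + m%:R != 0.
Hypothesis hL2 : forall m : nat, L2 k a b + m%:R != 0.
Hypothesis hd : forall m : nat, d + m%:R != 0.

Definition HH m := hyp [:: a / 3%:R; 3%:R^-1 + a / 3%:R; 2%:R / 3%:R + a / 3%:R; k%:R + d]
         [:: 3%:R / 4%:R + k%:R / 2%:R + a / 2%:R + b / 2%:R;
             3%:R / 4%:R + k%:R / 2%:R + a / 2%:R - b / 2%:R; d] m.

Lemma HHE m : HH m = poch a (3 * m) / 27%:R ^+ m * poch (k%:R + d) m /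
   (poch (L1 k a b) m * poch (L2 k a b) m * poch d m * m`!%:R).
Proof.
rewrite /HH /hyp !big_cons !big_nil poch_tripl /L1 /L2.
have h27 : (27%:R : R) ^+ m != 0 by rewrite expf_neq0 // pnatr_eq0.
field; by rewrite h27 fact_neq0 (poch_neq0 m hd) (poch_neq0 m hL1) (poch_neq0 m hL2).
Qed.

Lemma h01_zero m : (n < 2 * m)%N -> poch (h0 R n) m * poch (h1 R n) m = 0.
Proof.
move=> h.
have e := poch_dup2 (- (n%:R : R)) m; rewrite poch_negN // in e.
have : (4%:R : R) ^+ m * (poch (h0 R n) m * poch (h1 R n) m) = 0 by rewrite mulrA /h0 /h1 -e.
by move/eqP; rewrite mulf_eq0 expf_eq0 pnatr_eq0 andbF /= => /eqP.
Qed.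

Lemma h01_val m : (2 * m <= n)%N ->
  poch (h0 R n) m * poch (h1 R n) m = n`!%:R / (4%:R ^+ m * (n - 2 * m)`!%:R).
Proof.
move=> h.
have e := poch_dup2 (- (n%:R : R)) m.
rewrite poch_negfact in e.
have ef := bin_fact h.
have h4 : (4%:R : R) ^+ m != 0 by rewrite expf_neq0 // pnatr_eq0.
have hf := fact_neq0 R (n - 2 * m).
have s : ((-1) ^+ (2 * m) : R) = 1 by rewrite mulnC exprM sqrr_sign.
rewrite s mul1r in e.
rewrite /h0 /h1; apply: (mulfI h4); rewrite mulrA -e -ef !natrM.
field; by rewrite h4 hf.
Qed.

Lemma term_m m : HH m * ((K27 R) ^+ m * Eg (c4 R) (- (3 * m)%:R - a) (2 * m) n) =
  poch a n / (n`!%:R * 4%:R ^+ n) * TT n k a b d m.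
Proof.
rewrite /Eg /TT; case: ifP => h; last first.
  move/negbT: h; rewrite -ltnNge => h.
  by rewrite h01_zero // !(mulr0, mul0r).
set r := (n - 2 * m)%N.
have hn : n = (2 * m + r)%N by rewrite /r subnKC.
rewrite (_ : - (3 * m)%:R - a = - (a + (3 * m)%:R)); last by ring.
rewrite gb_c4 HHE /K27 h01_val //.
have hL1' := poch_neq0 m hL1.
have hL2' := poch_neq0 m hL2.
have hd' := poch_neq0 m hd.
have hm := fact_neq0 R m.
have hr := fact_neq0 R r.
have hnf := fact_neq0 R n.
have h4 : forall p, (4%:R : R) ^+ p != 0 by move=> p; rewrite expf_neq0 // pnatr_eq0.
have h27 : (27%:R : R) ^+ m != 0 by rewrite expf_neq0 // pnatr_eq0.
have h64 : (64%:R : R) ^+ m != 0 by rewrite expf_neq0 // pnatr_eq0.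
have e64 : (64%:R : R) ^+ m * 4%:R ^+ r = 4%:R ^+ n * 4%:R ^+ m.
  rewrite (_ : 64%:R = (4%:R : R) ^+ 3); last by rewrite -natrX.
  rewrite -exprM -!exprD; congr (_ ^+ _); lia.
have E2 : poch a (3 * m) * poch (a + (3 * m)%:R) r = poch a n * poch (a + n%:R) m.
  rewrite -poch_add -poch_add; congr (poch _ _); lia.
set W := poch (k%:R + d) m / (poch (L1 k a b) m * poch (L2 k a b) m * poch d m * m`!%:R *
   (4%:R ^+ n * 4%:R ^+ m) * r`!%:R).
transitivity (poch a (3 * m) * poch (a + (3 * m)%:R) r * W).
  rewrite /W -e64 expr_div_n.
  field; by rewrite hL1' hL2' hd' hm hr h4 h27 h64.
rewrite E2 /W.
field; by rewrite hL1' hL2' hd' hm hr hnf !h4.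
Qed.
End Fin.

Unset Implicit Arguments.

Theorem theorem6 (C : numClosedFieldType) (k : nat) (a b d : C) :
  let u := 3%:R / 4%:R - k%:R / 2%:R - a / 2%:R + b / 2%:R in
  let v := 3%:R / 4%:R - k%:R / 2%:R - a / 2%:R - b / 2%:R in
  not_nonpos_int (3%:R / 4%:R + k%:R / 2%:R + a / 2%:R + b / 2%:R) ->
  not_nonpos_int (3%:R / 4%:R + k%:R / 2%:R + a / 2%:R - b / 2%:R) ->
  not_nonpos_int d ->
  not_nonpos_int (2%:R^-1 + k%:R + a + b) ->
  not_nonpos_int (2%:R^-1 + k%:R + a - b) ->
  poch u k * poch v k != 0 ->
  fps_comp
    (hyp [:: a / 3%:R; 3%:R^-1 + a / 3%:R; 2%:R / 3%:R + a / 3%:R; k%:R + d]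
         [:: 3%:R / 4%:R + k%:R / 2%:R + a / 2%:R + b / 2%:R;
             3%:R / 4%:R + k%:R / 2%:R + a / 2%:R - b / 2%:R; d])
    (arg27 C)
  =
  fps_mul (binser (- 4%:R^-1) a)
    (fun n : nat =>
       poch a n * poch (4%:R^-1 - k%:R / 2%:R + a / 2%:R - b / 2%:R) n
       * poch (4%:R^-1 - k%:R / 2%:R + a / 2%:R + b / 2%:R) n
       / (n`!%:R * poch (2%:R^-1 + k%:R + a + b) n
          * poch (2%:R^-1 + k%:R + a - b) n)
       * Qk3 k n%:R a b d).
Proof.
move=> u v hL1 hL2 hd hC hD huv.
apply: assemble => n.
rewrite (eq_bigr (fun m : 'I_n.+1 => poch a n / (n`!%:R * 4%:R ^+ n) * TT n k a b d m)); last first.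
  by move=> m _; apply: term_m.
rewrite -mulr_sumr (@core2 C n k a b d hL1 hL2 hd hC hD huv) /AA /BB /Cc /Dd.
have h1 := poch_neq0 n hC.
have h2 := poch_neq0 n hD.
have h3 := fact_neq0 C n.
have h4 : (4%:R : C) ^+ n != 0 by rewrite expf_neq0 // pnatr_eq0.
field; by rewrite h1 h2 h3 h4.
Qed.
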